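(* Let $k\ge2$ and $n,t,m_0\ge1$ be integers, and let $\varepsilon\in(0,1)$ and $d,\varepsilon^*>0$ satisfy $d+k\varepsilon^*\le\varepsilon/2$ and $\sqrt{\varepsilon^*}\le\varepsilon/4$. Let $H$ be a $k$-partite $k$-graph with parts $V_1,\dots,V_k$, each of size $n$, such that $\delta'_{k-1}(H)\ge(\frac12+\varepsilon)n$. Suppose $V(H)=V_0\cup W_1\cup\dots\cup W_{kt}$ is a partition such that $|V_0|\le \varepsilon^* kn$, each $V_i\setminus V_0$ is the union of exactly $t$ of the clusters $W_1,\dots,W_{kt}$, all clusters have the same size $m_0$, and all but at most $\varepsilon^*(kt)^k$ of the legal $k$-sets $\{j_1,\dots,j_k\}\subseteq[kt]$ have $(W_{j_1},\dots,W_{j_k})$ $\varepsilon^*$-regular. Let $\mathcal R=\mathcal R(\varepsilon^*,d)$ be the corresponding cluster hypergraph. Then the number of legal $(k-1)$-sets $S\subseteq[kt]$ with $\deg_{\mathcal R}(S)<(\frac12+\frac{\varepsilon}{4})t$ is at most $k^{k+1}\sqrt{\varepsilon^*}\,t^{k-1}$.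
   Context: A $k$-partite $k$-graph $H$ is a $k$-graph with a fixed partition $V(H)=V_1\cup\dots\cup V_k$ such that every edge meets each $V_i$ in at most one vertex. A set $S$ is legal if $|S\cap V_i|\le1$ for all $i$. $\deg_H(S)$ is the number of $(k-|S|)$-sets $S'$ with $S\cup S'\in E(H)$; $\delta'_{k-1}(H)$ is the minimum of $\deg_H(S)$ over legal $(k-1)$-sets. For pairwise disjoint $A_1,\dots,A_k\subseteq V(H)$, $e_H(A_1,\dots,A_k)$ is the number of $(a_1,\dots,a_k)\in A_1\times\dots\times A_k$ with $\{a_1,\dots,a_k\}\in E(H)$, and $d_H(A_1,\dots,A_k)=e_H(A_1,\dots,A_k)/(|A_1|\cdots|A_k|)$. A $k$-tuple $(U_1,\dots,U_k)$ of disjoint sets is $(\varepsilon^*,d')$-regular if $|d_H(A_1,\dots,A_k)-d'|\le\varepsilon^*$ for all $A_i\subseteq U_i$ with $|A_i|\ge\varepsilon^*|U_i|$, and $\varepsilon^*$-regular if it is $(\varepsilon^*,d')$-regular for some $d'\ge0$. In the setting of the statement, an index set $S\subseteq[kt]$ is legal if its clusters lie in distinct parts $V_i$; the cluster hypergraph $\mathcal R(\varepsilon^*,d)$ is the $k$-partite $k$-graph on vertex set $[kt]$ (with the $t$ indices of clusters inside $V_i$ forming its $i$-th part) whose edges are the legal $k$-sets $\{j_1,\dots,j_k\}$ such that $(W_{j_1},\dots,W_{j_k})$ is $\varepsilon^*$-regular and $d_H(W_{j_1},\dots,W_{j_k})\ge d$. *)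

(* Defs.v *)
From HB Require Import structures.
From mathcomp Require Import all_boot all_order all_algebra.
From mathcomp Require Import reals.
Set Implicit Arguments. Unset Strict Implicit. Unset Printing Implicit Defensive.
Import Order.TTheory GRing.Theory Num.Theory.
Local Open Scope ring_scope.

(* A k-partite k-graph: vertex finType V, partition map [part : V -> 'I_k]
   (V_i = [set x | part x == i]), edge set [E : {set {set V}}]. *)

Definition vpart (V : finType) (k : nat) (part : V -> 'I_k) (i : 'I_k) : {set V} :=
  [set x | part x == i].

Definition legalV (V : finType) (k : nat) (part : V -> 'I_k) (S : {set V}) : bool :=
  [forall i : 'I_k, #|S :&: vpart part i| <= 1]%N.

Definition kpartite_kgraph (V : finType) (k : nat) (part : V -> 'I_k)
  (E : {set {set V}}) : Prop :=
  forall e, e \in E -> #|e| = k /\ legalV part e.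

Definition deg (T : finType) (E : {set {set T}}) (k : nat) (S : {set T}) : nat :=
  #|[set S' : {set T} | (#|S'| == k - #|S|)%N && (S :|: S' \in E)]|.

Definition eH (V : finType) (k : nat) (E : {set {set V}}) (A : 'I_k -> {set V}) : nat :=
  #|[set f : {ffun 'I_k -> V} |
       [forall i, f i \in A i] && ([set f i | i : 'I_k] \in E)]|.

Definition dH {R : realType} (V : finType) (k : nat) (E : {set {set V}})
  (A : 'I_k -> {set V}) : R :=
  (eH E A)%:R / (\prod_(i < k) (#|A i|)%:R).

Definition regular_with {R : realType} (V : finType) (k : nat) (E : {set {set V}})
  (U : 'I_k -> {set V}) (epsS d' : R) : Prop :=
  forall A : 'I_k -> {set V},
    (forall i, A i \subset U i) ->
    (forall i, epsS * (#|U i|)%:R <= (#|A i|)%:R) ->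
    `|dH E A - d'| <= epsS.

Definition regular {R : realType} (V : finType) (k : nat) (E : {set {set V}})
  (U : 'I_k -> {set V}) (epsS : R) : Prop :=
  exists d' : R, 0 <= d' /\ regular_with E U epsS d'.

Definition cpart (V : finType) (k N : nat) (part : V -> 'I_k) (V0 : {set V})
  (W : 'I_N -> {set V}) (i : 'I_k) : {set 'I_N} :=
  [set j | W j \subset vpart part i :\: V0].

Definition legalI (V : finType) (k N : nat) (part : V -> 'I_k) (V0 : {set V})
  (W : 'I_N -> {set V}) (S : {set 'I_N}) : bool :=
  [forall i : 'I_k, #|S :&: cpart part V0 W i| <= 1]%N.

(* (W_{j_1},...,W_{j_k}) for J = {j_1,...,j_k}: an enumeration g of J *)
Definition enumerates (k N : nat) (g : 'I_k -> 'I_N) (J : {set 'I_N}) : Prop :=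
  injective g /\ [set g i | i : 'I_k] = J.

(* Main.v *)
Require Import Defs.
From HB Require Import structures.
From mathcomp Require Import all_boot all_order all_algebra.
From mathcomp Require Import reals.
From mathcomp Require Import ring lra.
Import Order.TTheory GRing.Theory Num.Theory.

Set Implicit Arguments. Unset Strict Implicit. Unset Printing Implicit Defensive.

Section Clusters.
Variables (k t m0 : nat) (V : finType) (part : V -> 'I_k) (V0 : {set V})
  (W : 'I_(k * t) -> {set V}) (x0 : V).
Hypothesis Hm0 : (0 < m0)%N.
Hypothesis HW0 : forall j, [disjoint V0 & W j].
Hypothesis HWW : forall j j', j != j' -> [disjoint W j & W j'].
Hypothesis Hcov : V0 :|: \bigcup_(j < k * t) W j = [set: V].
Hypothesis HJ : forall i : 'I_k, exists J : {set 'I_(k * t)},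
      #|J| = t /\ vpart part i :\: V0 = \bigcup_(j in J) W j.
Hypothesis HWc : forall j, #|W j| = m0.

Local Notation cp := (cpart part V0 W).

Lemma Wn0 j : exists x, x \in W j.
Proof. by apply/card_gt0P; rewrite HWc. Qed.

Lemma disjW j j' x : x \in W j -> x \in W j' -> j = j'.
Proof.
move=> xj xj'; apply/eqP; apply: contraTT xj' => /HWW D.
by rewrite (disjointFr D xj).
Qed.

Lemma notV0 j x : x \in W j -> x \notin V0.
Proof. by move=> xj; rewrite (disjointFl (HW0 j) xj). Qed.

Lemma cpartE i (J : {set 'I_(k * t)}) : vpart part i :\: V0 = \bigcup_(j in J) W j -> cp i = J.
Proof.
move=> HE; apply/setP => j; rewrite /cpart inE HE.
apply/idP/idP => [Hs | jJ]; last by apply: bigcup_sup.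
have [x xj] := Wn0 j.
have /bigcupP [j' j'J xj'] := subsetP Hs x xj.
by rewrite (disjW xj xj').
Qed.

Lemma cpart_card i : #|cp i| = t.
Proof. by have [J [HJc HE]] := HJ i; rewrite (cpartE HE). Qed.

Lemma cpart_cover i : vpart part i :\: V0 = \bigcup_(j in cp i) W j.
Proof. by have [J [HJc HE]] := HJ i; rewrite (cpartE HE). Qed.

Definition pc j := part (odflt x0 [pick x in W j]).

Lemma pickW j : odflt x0 [pick x in W j] \in W j.
Proof.
case: pickP => [x //|H]; have [x xj] := Wn0 j.
by move: (H x); rewrite xj.
Qed.

Lemma cpW j i : j \in cp i -> W j \subset vpart part i.
Proof.
rewrite /cpart inE => /subsetP H; apply/subsetP => x /H.
by rewrite inE => /andP[].
Qed.

Lemma partW j i x : j \in cp i -> x \in W j -> part x = i.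
Proof. by move=> /cpW /subsetP H /H; rewrite inE => /eqP. Qed.

Lemma pcP j : j \in cp (pc j).
Proof.
have xj := pickW j.
have : odflt x0 [pick x in W j] \in vpart part (pc j) :\: V0.
  by rewrite !inE (notV0 xj) /pc eqxx.
rewrite cpart_cover => /bigcupP [j' j'c xj'].
by move: j'c; rewrite -(disjW xj xj').
Qed.

Lemma pc_uniq j i : j \in cp i -> pc j = i.
Proof.
move=> H; rewrite /pc; exact: (partW H (pickW j)).
Qed.

Lemma partWpc j x : x \in W j -> part x = pc j.
Proof. move=> xj; exact: (partW (pcP j) xj). Qed.

Lemma card_bigcupW (J : {set 'I_(k * t)}) :
  #|\bigcup_(j in J) W j| = (#|J| * m0)%N.
Proof.
pose F j := if j \in J then W j else set0.
have -> : \bigcup_(j in J) W j = \bigcup_j F j.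
  by rewrite big_mkcond.
rewrite -sum1_card partition_disjoint_bigcup; last first.
  move=> i j ij; rewrite /F; case: ifP => _; last first.
    by rewrite -setI_eq0 set0I.
  case: ifP => _; last by rewrite -setI_eq0 setI0.
  exact: HWW.
rewrite -sum_nat_const [RHS]big_mkcond /=; apply: eq_bigr => j _.
by rewrite /F; case: ifP => _; rewrite sum1_card ?cards0 ?HWc.
Qed.

Lemma n_ge i : (t * m0 <= #|vpart part i|)%N.
Proof.
rewrite -(cpart_card i) -card_bigcupW -cpart_cover.
apply: subset_leq_card; exact: subsetDl.
Qed.

Lemma legal_pc_inj S : legalI part V0 W S -> {in S &, injective pc}.
Proof.
move=> /forallP HS j1 j2 j1S j2S E.
have := HS (pc j1) => /card_le1_eqP H.
apply: H; rewrite inE ?j1S ?j2S /=; [rewrite E|]; exact: pcP.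
Qed.

Variable (E : {set {set V}}).
Hypothesis HE : kpartite_kgraph part E.
Hypothesis Hk : (0 < k)%N.
Variable S : {set 'I_(k * t)}.
Hypothesis HS : legalI part V0 W S.
Hypothesis HSc : #|S| = k.-1.

Definition X := [set phi : {ffun 'I_(k * t) -> V} | phi \in pfamily x0 S W].
Definition T (phi : {ffun 'I_(k * t) -> V}) := phi @: S.
Definition C := [set j | (j \notin S) && (pc j \notin pc @: S)].
Definition cnt phi j := #|[set v in W j | T phi :|: [set v] \in E]|.
Definition P j := [set p : {ffun 'I_(k * t) -> V} * V |
   (p.1 \in X) && ((p.2 \in W j) && (T p.1 :|: [set p.2] \in E))].

Lemma foldr_const (A : Type) (f : A -> nat) c s :
  (forall x, f x = c) -> foldr muln 1 (map f s) = (c ^ size s)%N.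
Proof. by move=> Hf; elim: s => //= a s ->; rewrite Hf expnS. Qed.

Lemma card_X : #|X| = (m0 ^ k.-1)%N.
Proof.
rewrite cardsE card_pfamily /image_mem (foldr_const _ (c := m0)) //.
by rewrite -cardE HSc.
Qed.

Lemma XP phi : phi \in X ->
  (forall j, j \in S -> phi j \in W j) /\ (forall j, j \notin S -> phi j = x0).
Proof.
rewrite inE => /pfamilyP [Hsup Hin]; split => // j jS.
apply/eqP; apply: contraNT jS => H.
by apply: (subsetP Hsup); rewrite inE.
Qed.

Lemma T_card phi : phi \in X -> #|T phi| = k.-1.
Proof.
move=> /XP [H1 _]; rewrite /T card_in_imset ?HSc // => j1 j2 j1S j2S E12.
by apply: (disjW (H1 _ j1S)); rewrite E12; apply: H1.
Qed.

Lemma T_legal phi : phi \in X -> legalV part (T phi).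
Proof.
move=> /XP [H1 _]; apply/forallP => i.
move/forallP: HS => /(_ i) HSi.
apply: leq_trans HSi.
apply: leq_trans (leq_imset_card phi _).
apply: subset_leq_card; apply/subsetP => x; rewrite !inE => /andP [/imsetP [j jS ->] Hp].
apply/imsetP; exists j => //; rewrite inE jS /=.
have <- : pc j = i by rewrite -(partWpc (H1 _ jS)); apply/eqP.
exact: pcP.
Qed.
Lemma notinT phi v : phi \in X -> T phi :|: [set v] \in E -> v \notin T phi.
Proof.
move=> HX He; apply/negP => vT.
have := HE He => [[Hc _]].
move: Hc; have /setUidPl -> : [set v] \subset T phi by rewrite sub1set.
rewrite T_card // => Hkk; have := ltn_predL k.
by rewrite Hk {1}Hkk ltnn.
Qed.

Lemma no_same_part phi v j' : phi \in X -> T phi :|: [set v] \in E ->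
  j' \in S -> part v = pc j' -> False.
Proof.
move=> HX He j'S Hp.
have vT := notinT HX He.
have [_ /forallP /(_ (part v)) /card_le1_eqP Hl] := HE He.
have [H1 _] := XP HX.
have Heq : v = phi j'.
  apply: Hl; rewrite !inE ?eqxx ?orbT //.
  by rewrite (partWpc (H1 _ j'S)) Hp eqxx andbT (imset_f phi j'S).
by move/negP: vT; apply; rewrite Heq (imset_f phi j'S).
Qed.

Lemma card_bigcup_le (I : finType) (Q : pred I) (F : I -> {set V}) :
  (#|\bigcup_(j | Q j) F j| <= \sum_(j | Q j) #|F j|)%N.
Proof.
apply: (big_ind2 (fun (A : {set V}) n => #|A| <= n)%N).
- by rewrite cards0.
- move=> A1 n1 A2 n2 H1 H2; apply: leq_trans (leq_card_setU A1 A2) _.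
  exact: leq_add.
- by [].
Qed.

Lemma deg_le phi : phi \in X ->
  (deg E k (T phi) <= #|V0| + \sum_(j in C) cnt phi j)%N.
Proof.
move=> HX.
have [H1 _] := XP HX.
pose Dv := [set v | T phi :|: [set v] \in E].
have step1 : (deg E k (T phi) <= #|Dv|)%N.
  apply: leq_trans (leq_imset_card (@set1 V) Dv).
  apply: subset_leq_card; apply/subsetP => S'.
  rewrite !inE T_card // => /andP [Hc HSE].
  have : #|S'| == 1%N by move: Hc; case: (k) Hk => // k' _; rewrite /= subSnn.
  case/cards1P => v Sv; apply/imsetP; exists v => //.
  by rewrite inE -Sv.
apply: leq_trans step1 _.
apply: leq_trans (leq_add (leqnn _) (card_bigcup_le (mem C) (fun j => [set v in W j | T phi :|: [set v] \in E]))).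
apply: leq_trans (leq_card_setU V0 _).
apply: subset_leq_card; apply/subsetP => v; rewrite inE => He.
rewrite inE; case: (boolP (v \in V0)) => //= vV0.
have : v \in V0 :|: \bigcup_(j < k * t) W j by rewrite Hcov.
rewrite inE (negbTE vV0) /= => /bigcupP [j _ vj].
apply/bigcupP; exists j; last by rewrite inE vj He.
rewrite inE; apply/andP; split.
  apply/negP => jS; apply: (no_same_part HX He jS); exact: partWpc.
apply/negP => /imsetP [j' j'S Hpc].
apply: (no_same_part HX He j'S); rewrite -Hpc; exact: partWpc.
Qed.
Lemma sumP j : (\sum_(phi in X) cnt phi j = #|P j|)%N.
Proof.
rewrite /cnt.
under eq_bigr => phi _ do rewrite -sum1dep_card.
rewrite pair_big_dep /= sum1dep_card.
by apply: eq_card => p; rewrite !inE.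
Qed.

Lemma P_le j : (#|P j| <= m0 ^ k)%N.
Proof.
apply: leq_trans (_ : #|setX X (W j)| <= _)%N.
  apply: subset_leq_card; apply/subsetP => p; rewrite !inE.
  by case/andP => -> /andP [-> _].
rewrite cardsX card_X HWc -expnSr prednK //.
Qed.

Lemma C_card : (#|C| <= t)%N.
Proof.
have Hc : #|pc @: S| = k.-1 by rewrite card_in_imset ?HSc //; exact: legal_pc_inj.
have : #|~: (pc @: S)| == 1%N.
  have := cardsC (pc @: S); rewrite card_ord Hc => H.
  by rewrite -(eqn_add2l k.-1) H addn1 prednK.
case/cards1P => i0 Hi0.
apply: (@leq_trans #|cp i0|); last by rewrite cpart_card.
apply: subset_leq_card; apply/subsetP => j.
rewrite inE => /andP [_ Hj].
have : pc j \in ~: (pc @: S) by rewrite inE.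
by rewrite Hi0 inE => /eqP <-; exact: pcP.
Qed.

Lemma C_legal j : j \in C -> legalI part V0 W (j |: S) /\ #|j |: S| = k.
Proof.
rewrite inE => /andP [jS jpc]; split; last first.
  by rewrite cardsU1 jS HSc add1n prednK.
apply/forallP => i.
case: (eqVneq (pc j) i) => [<-|Hne].
  apply: leq_trans (_ : #|[set j]| <= 1)%N; last by rewrite cards1.
  apply: subset_leq_card; apply/subsetP => j'; rewrite in_setI in_setU1 in_set1 => /andP [/orP [//|j'S] Hj'].
  exfalso; move/negP: jpc; apply; apply/imsetP; exists j' => //.
  by rewrite (pc_uniq Hj').
move/forallP: HS => /(_ i); apply: leq_trans.
apply: subset_leq_card; apply/subsetP => j'; rewrite in_setI in_setU1 => /andP [/orP [/eqP Ej|j'S] Hj'].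
  by move: Hne; rewrite -Ej (pc_uniq Hj') eqxx.
by rewrite in_setI j'S.
Qed.

Lemma P_eH j (g : 'I_k -> 'I_(k * t)) : j \in C -> enumerates g (j |: S) ->
  (#|P j| <= eH E (W \o g))%N.
Proof.
move=> jC [ginj gim].
have jS : j \notin S by move: jC; rewrite inE => /andP [].
pose F (p : {ffun 'I_(k * t) -> V} * V) :=
  [ffun i => if g i == j then p.2 else p.1 (g i)].
have gS : forall j', j' \in S -> exists2 i, g i = j' & g i != j.
  move=> j' j'S; have : j' \in j |: S by rewrite in_setU1 j'S orbT.
  rewrite -gim => /imsetP [i _ Ei]; exists i; first by rewrite Ei.
  by apply/eqP => Eg; move: jS; rewrite -Eg -Ei j'S.
have gj : exists i, g i = j.
  have : j \in j |: S by rewrite in_setU1 eqxx.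
  by rewrite -gim => /imsetP [i _ ->]; exists i.
rewrite /eH -(card_in_imset (f := F)); last first.
  move=> [a b] [c d]; rewrite /P in_set /= => /andP [aX _].
  rewrite in_set /= => /andP [cX _] HF.
  have [_ Ha] := XP aX; have [_ Hc] := XP cX.
  have Ef : forall i, F (a, b) i = F (c, d) i by move=> i; rewrite HF.
  congr pair.
    apply/ffunP => j'; case: (boolP (j' \in S)) => [j'S|j'S]; last by rewrite Ha ?Hc.
    have [i <- gij] := gS j' j'S; have := Ef i; rewrite !ffunE /=.
    by rewrite (negbTE gij).
  have [i gi] := gj; have := Ef i; rewrite !ffunE /= gi eqxx //.
apply: subset_leq_card; apply/subsetP => _ /imsetP [[a b] Hp ->].
move: Hp; rewrite /P in_set /= => /andP [aX /andP [bW He]].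
have [Ha _] := XP aX.
rewrite in_set; apply/andP; split.
  apply/forallP => i; rewrite ffunE /=; case: eqP => [->|Hne] //.
  apply: Ha; have : g i \in j |: S by rewrite -gim imset_f.
  by rewrite in_setU1 => /orP [/eqP /Hne|].
suff -> : [set F (a, b) i | i : 'I_k] = T a :|: [set b] by [].
apply/setP => x; apply/imsetP/idP.
  move=> [i _ ->]; rewrite ffunE /= in_setU in_set1; case: eqP => [_|Hne].
    by rewrite eqxx orbT.
  have : g i \in j |: S by rewrite -gim imset_f.
  by rewrite in_setU1 => /orP [/eqP /Hne //|gS']; rewrite /T imset_f.
rewrite in_setU in_set1 => /orP [/imsetP [j' j'S ->]|/eqP ->].
  have [i gi gij] := gS j' j'S; exists i => //.
  by rewrite ffunE /= (negbTE gij) gi.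
have [i gi] := gj; exists i => //.
by rewrite ffunE /= gi eqxx.
Qed.

Lemma degR_ge (ER : {set {set 'I_(k * t)}}) :
  (#|[set j in C | j |: S \in ER]| <= deg ER k S)%N.
Proof.
rewrite -(card_imset _ (@set1_inj _)).
apply: subset_leq_card; apply/subsetP => _ /imsetP [j Hj ->].
move: Hj; rewrite !inE => /andP [_ HJ'].
rewrite cards1 HSc.
have -> : (k - k.-1 = 1)%N by case: (k) Hk => // k' _; rewrite /= subSnn.
by rewrite eqxx /= setUC.
Qed.
Local Open Scope ring_scope.

Lemma per_S (R : realType) (n : nat) (eps d epsS : R)
  (ER Irr : {set {set 'I_(k * t)}}) :
  0 < eps -> 0 < d -> 0 < epsS -> d + k%:R * epsS <= eps / 2 ->
  (forall i, #|vpart part i| = n) ->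
  (forall T0 : {set V}, legalV part T0 -> #|T0| = k.-1 ->
     (1 / 2 + eps) * n%:R <= (deg E k T0)%:R) ->
  (#|V0|)%:R <= epsS * (k * n)%:R ->
  (forall J : {set 'I_(k * t)}, legalI part V0 W J -> #|J| = k -> J \notin Irr ->
     exists g : 'I_k -> 'I_(k * t), enumerates g J /\ regular E (W \o g) epsS) ->
  (forall J : {set 'I_(k * t)}, J \in ER <->
     [/\ legalI part V0 W J, #|J| = k &
         exists g : 'I_k -> 'I_(k * t), [/\ enumerates g J, regular E (W \o g) epsS
                                          & d <= dH E (W \o g)]]) ->
  (deg ER k S)%:R < (1 / 2 + eps / 4) * t%:R ->
  eps / 4 * t%:R < (#|[set j in C | j |: S \in Irr]|)%:R.
Proof.
move=> Heps Hd HepsS Hpar Hn Hdeg HV0 Hirr HER Hbad.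
set G := #|[set j in C | j |: S \in ER]|.
set B := #|[set j in C | j |: S \in Irr]|.
have Hmk : (m0 ^ k = m0 ^ k.-1 * m0)%N by rewrite -expnSr prednK.
have H1 : (#|X|)%:R * ((1 / 2 + eps) * n%:R) <=
          ((#|X| * #|V0|) + \sum_(j in C) #|P j|)%N%:R :> R.
  apply: le_trans (_ : \sum_(phi in X) (deg E k (T phi))%:R <= _).
    rewrite mulr_natl -sumr_const; apply: ler_sum => phi HX.
    by apply: Hdeg; [exact: T_legal|exact: T_card].
  rewrite -natr_sum ler_nat.
  have Hle : forall phi, phi \in X ->
    (deg E k (T phi) <= #|V0| + \sum_(j in C) cnt phi j)%N by move=> phi; exact: deg_le.
  apply: leq_trans (leq_sum _ Hle) _.
  rewrite big_split /= sum_nat_const exchange_big /=.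
  by apply: leq_add => //; apply: eq_leq; apply: eq_bigr => j _; exact: sumP.
have Hm0R : 0 < (m0%:R : R) by rewrite ltr0n.
have HmkR : 0 < ((m0 ^ k)%N%:R : R) by rewrite ltr0n expn_gt0 Hm0.
have HPj : forall j, j \in C ->
    (#|P j|)%:R <= (m0 ^ k)%N%:R * (((j |: S \in ER) : nat) + ((j |: S \in Irr) : nat))%N%:R
                   + d * (m0 ^ k)%N%:R :> R.
  move=> j jC.
  have Pl : (#|P j|)%:R <= (m0 ^ k)%N%:R :> R by rewrite ler_nat P_le.
  case: (boolP (j |: S \in ER)) => HER'; case: (boolP (j |: S \in Irr)) => HI /=.
  - apply: le_trans Pl _; rewrite natrD mulrDr mulr1; nra.
  - apply: le_trans Pl _; rewrite addn0 mulr1; nra.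
  - apply: le_trans Pl _; rewrite add0n mulr1; nra.
  have [legJ cardJ] := C_legal jC.
  have [g [Hg Hreg]] := Hirr _ legJ cardJ HI.
  have Hlt : dH E (W \o g) < d.
    rewrite ltNge; apply/negP => Hdd; move/negP: HER'; apply; apply/HER.
    by split => //; exists g; split.
  have HdH : dH E (W \o g) = (eH E (W \o g))%:R / (m0 ^ k)%N%:R :> R.
    rewrite /dH.
    rewrite (eq_bigr (fun _ => (m0%:R : R))); last by move=> i _; rewrite /= HWc.
    by rewrite prodr_const card_ord natrX.
  have Hle : (#|P j|)%:R <= (eH E (W \o g))%:R :> R by rewrite ler_nat P_eH.
  rewrite addn0 mulr0 add0r.
  apply: le_trans Hle _.
  have : (eH E (W \o g))%:R = dH E (W \o g) * (m0 ^ k)%N%:R :> R.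
    by rewrite HdH mulfVK // gt_eqF.
  move=> ->; rewrite ler_pM2r //; exact: ltW.
have H2 : (\sum_(j in C) #|P j|)%N%:R <=
     (m0 ^ k)%N%:R * (G + B)%N%:R + d * (m0 ^ k)%N%:R * t%:R :> R.
  rewrite natr_sum; apply: le_trans (ler_sum _ HPj) _.
  rewrite big_split /= -mulr_sumr sumr_const -natr_sum.
  have -> : (\sum_(j in C) (((j |: S \in ER) : nat) + ((j |: S \in Irr) : nat)))%N = (G + B)%N.
    rewrite big_split /= /G /B -!sum1dep_card !big_mkcondr /=.
    by congr (_ + _)%N; apply: eq_bigr => j _; case: ifP.
  apply: lerD => //; rewrite -[_ *+ #|C|]mulr_natr; apply: ler_wpM2l.
    by apply: mulr_ge0; apply: ltW.
  by rewrite ler_nat C_card.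
have HXr : (#|X|)%:R = (m0 ^ k.-1)%N%:R :> R by rewrite card_X.
have HM : 0 < (m0 ^ k.-1)%N%:R :> R by rewrite ltr0n expn_gt0 Hm0.
have Hmk' : (m0 ^ k)%N%:R = (m0 ^ k.-1)%N%:R * m0%:R :> R by rewrite Hmk natrM.
move: H1 H2; rewrite natrD natrM HXr Hmk'.
set M := (m0 ^ k.-1)%N%:R : R.
set Sm := (\sum_(j in C) #|P j|)%N%:R : R.
move=> H1 H2.
have F1 : (1/2 + eps) * n%:R <= #|V0|%:R + m0%:R * (G + B)%N%:R + d * m0%:R * t%:R.
  rewrite -(ler_pM2l HM); apply: le_trans H1 _.
  nra.
have F2 : t%:R * m0%:R <= n%:R :> R.
  by rewrite -natrM ler_nat -(Hn (Ordinal Hk)) n_ge.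
have F3 : G%:R <= (deg ER k S)%:R :> R by rewrite ler_nat degR_ge.
move: HV0; rewrite natrM => HV0'.
have Hc : 0 <= 1/2 + eps - k%:R * epsS :> R.
  have : 0 <= d by apply: ltW.
  lra.
have F4 : (1/2 + eps - k%:R * epsS) * (t%:R * m0%:R) <=
          (1/2 + eps - k%:R * epsS) * n%:R by apply: ler_wpM2l.
have F5 : (1/2 + eps - k%:R * epsS) * t%:R <= G%:R + B%:R + d * t%:R.
  rewrite -(ler_pM2l Hm0R); rewrite natrD in F1; nra.
have Ht : 0 <= t%:R :> R by [].
have F6 : (d + k%:R * epsS) * t%:R <= eps / 2 * t%:R by apply: ler_wpM2r.
nra.
Qed.
End Clusters.

Unset Implicit Arguments.
Local Open Scope ring_scope.

Theorem proposition6p3 (R : realType) (k n t m0 : nat) (eps d epsS : R)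
  (V : finType) (part : V -> 'I_k) (E : {set {set V}})
  (V0 : {set V}) (W : 'I_(k * t) -> {set V}) (ER : {set {set 'I_(k * t)}}) :
  (2 <= k)%N -> (1 <= n)%N -> (1 <= t)%N -> (1 <= m0)%N ->
  0 < eps < 1 -> 0 < d -> 0 < epsS ->
  d + k%:R * epsS <= eps / 2 ->
  Num.sqrt epsS <= eps / 4 ->
  (* H is a k-partite k-graph with parts of size n *)
  kpartite_kgraph part E ->
  (forall i : 'I_k, #|vpart part i| = n) ->
  (* delta'_{k-1}(H) >= (1/2 + eps) n *)
  (forall S : {set V}, legalV part S -> #|S| = k.-1 ->
     (1 / 2 + eps) * n%:R <= (deg E k S)%:R) ->
  (* partition V(H) = V0 u W_1 u ... u W_{kt} *)
  (forall j, [disjoint V0 & W j]) ->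
  (forall j j', j != j' -> [disjoint W j & W j']) ->
  V0 :|: \bigcup_(j < k * t) W j = [set: V] ->
  (#|V0|)%:R <= epsS * (k * n)%:R ->
  (forall i : 'I_k, exists J : {set 'I_(k * t)},
      #|J| = t /\ vpart part i :\: V0 = \bigcup_(j in J) W j) ->
  (forall j, #|W j| = m0) ->
  (* all but at most eps*(kt)^k legal k-sets are eps*-regular *)
  (exists Irr : {set {set 'I_(k * t)}},
      (#|Irr|)%:R <= epsS * ((k * t)%:R) ^+ k /\
      forall J : {set 'I_(k * t)}, legalI part V0 W J -> #|J| = k -> J \notin Irr ->
        exists g : 'I_k -> 'I_(k * t), enumerates g J /\ regular E (W \o g) epsS) ->
  (* R = R(eps*, d) is the cluster hypergraph *)
  (forall J : {set 'I_(k * t)}, J \in ER <->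
     [/\ legalI part V0 W J, #|J| = k &
         exists g : 'I_k -> 'I_(k * t), [/\ enumerates g J, regular E (W \o g) epsS
                                          & d <= dH E (W \o g)]]) ->
  (#|[set S : {set 'I_(k * t)} | legalI part V0 W S && (#|S| == k.-1)%N &&
       ((deg ER k S)%:R < (1 / 2 + eps / 4) * t%:R)]|)%:R
    <= k%:R ^+ (k + 1) * Num.sqrt epsS * t%:R ^+ k.-1.
Proof.
move=> Hk2 Hn1 Ht1 Hm0 /andP [Heps Heps1] Hd HepsS Hpar Hsq HE Hn Hdeg HW0 HWW Hcov
  HV0 HJ HWc [Irr [HIrr Hirr]] HER.
have Hk : (0 < k)%N by apply: leq_trans Hk2.
have Hkt : (0 < k * t)%N by rewrite muln_gt0 Hk Ht1.
have [x0 _] := Wn0 Hm0 HWc (Ordinal Hkt).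
set Bad := [set S : {set 'I_(k * t)} | _].
pose BS (S0 : {set 'I_(k * t)}) := [set j in C part W x0 S0 | j |: S0 \in Irr].
have Hper : forall S0, S0 \in Bad -> eps / 4 * t%:R < (#|BS S0|)%:R.
  move=> S0; rewrite inE => /andP [/andP [HS /eqP HSc] Hb].
  exact: (per_S x0 Hm0 HW0 HWW Hcov HJ HWc HE Hk HS HSc (R := R) (n := n)
           Heps Hd HepsS Hpar Hn Hdeg HV0 Hirr HER Hb).
have HBS : forall S0 j, j \in BS S0 -> (j \notin S0) /\ (j |: S0 \in Irr).
  by move=> S0 j; rewrite !inE => /andP [/andP [-> _] ->].
have Hdc : (\sum_(S0 in Bad) #|BS S0| <= k * #|Irr|)%N.
  rewrite (eq_bigr (fun S0 => \sum_(j in BS S0) 1)%N); last by move=> S0 _; rewrite sum1_card.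
  rewrite (exchange_big_dep predT) //=.
  apply: leq_trans (_ : \sum_j #|[set J in Irr | (j \in J) && (#|J| == k)]| <= _)%N.
    apply: leq_sum => j _; rewrite sum1dep_card.
    rewrite -(@card_in_imset _ _ (fun S0 => j |: S0)); last first.
      move=> S1 S2; rewrite !inE => /andP [_ /andP [/andP [jS1 _] _]].
      move=> /andP [_ /andP [/andP [jS2 _] _]] Heq.
      by rewrite -(setU1K jS1) Heq setU1K.
    apply: subset_leq_card; apply/subsetP => _ /imsetP [S0 HS0 ->].
    move: HS0; rewrite !inE => /andP [/andP [/andP [_ /eqP HSc] _] /andP [/andP [jS _] HI]].
    by rewrite HI eqxx /= cardsU1 jS HSc add1n prednK.
  under eq_bigr do rewrite -sum1dep_card.
  rewrite (exchange_big_dep predT) //=.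
  rewrite [(k * #|Irr|)%N]mulnC -sum_nat_const [X in (_ <= X)%N]big_mkcond /=.
  apply: leq_sum => J _.
  case: (boolP (J \in Irr)) => HJI /=; last by rewrite big_pred0 // => i; rewrite (negbTE HJI).
  case: (#|J| =P k) => [HJk|Hne].
    apply: (@leq_trans #|J|); last by rewrite HJk.
    by rewrite -sum1_card; apply: eq_leq; apply: eq_bigl => i; rewrite andbT.
  by move/eqP/negbTE: Hne => Hne; rewrite big_pred0 // => i; rewrite andbF.
have A1 : (#|Bad|)%:R * (eps / 4 * t%:R) <= (k * #|Irr|)%N%:R :> R.
  rewrite mulr_natl -sumr_const.
  apply: le_trans (_ : \sum_(S0 in Bad) (#|BS S0|)%:R <= _).
    by apply: ler_sum => S0 HS0; apply: ltW; exact: Hper.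
  by rewrite -natr_sum ler_nat.
set s := Num.sqrt epsS.
set K := k%:R : R.
set tt := t%:R : R.
set A := (#|Bad|)%:R : R.
have Hs0 : 0 <= s by exact: sqrtr_ge0.
have Hs2 : epsS = s ^+ 2 by rewrite sqr_sqrtr // ltW.
have HK : 0 <= K by [].
have Htt : 0 < tt by rewrite ltr0n.
set Q := K ^+ k * tt ^+ k.-1.
have HQ : 0 <= Q by apply: mulr_ge0; apply: exprn_ge0.
have Hkt' : ((k * t)%:R) ^+ k = tt * Q :> R.
  rewrite natrM exprMn /Q -/K -/tt.
  have -> : tt ^+ k = tt * tt ^+ k.-1 by rewrite -exprS prednK.
  ring.
have A2 : A * (eps / 4 * tt) <= K * (s ^+ 2 * (tt * Q)).
  apply: le_trans A1 _; rewrite natrM -Hkt' -Hs2.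
  by apply: ler_wpM2l.
have B1 : A * (eps / 4) <= K * (s ^+ 2 * Q).
  rewrite -(ler_pM2r Htt); apply: le_trans (_ : A * (eps / 4 * tt) <= _).
    by rewrite le_eqVlt; apply/orP; left; apply/eqP; ring.
  by apply: le_trans A2 _; rewrite le_eqVlt; apply/orP; left; apply/eqP; ring.
have B2 : K * (s ^+ 2 * Q) <= eps / 4 * (K * s * Q).
  have : s ^+ 2 <= s * (eps / 4) by rewrite expr2; apply: ler_wpM2l.
  move=> H; have HKQ : 0 <= K * Q by apply: mulr_ge0.
  have := ler_wpM2l HKQ H.
  move=> H'; have -> : K * (s ^+ 2 * Q) = K * Q * s ^+ 2 by ring.
  by apply: le_trans H' _; rewrite le_eqVlt; apply/orP; left; apply/eqP; ring.
have B3 : A <= K * s * Q.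
  have He4 : 0 < eps / 4 by apply: divr_gt0 => //; rewrite ltr0n.
  rewrite -(ler_pM2l He4) mulrC; exact: le_trans B1 B2.
apply: le_trans B3 _; rewrite le_eqVlt; apply/orP; left; apply/eqP.
by rewrite /Q addn1 exprS /K; ring.
Qed.
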